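(* Consider the stationary M/M/1/K queue with arrival rate $\lambda>0$, service rate $\mu>0$, $\rho=\lambda/\mu$, capacity $K\ge1$, queue length process $\{Q(t)\}$ and departure process $\{D(t)\}$. Then $$\lim_{t\to\infty}\mathrm{Cov}\big(D(t),Q(t)\big)=\begin{cases}\rho^{K+1}\dfrac{K^2(\rho-1)^2(1+3\rho^{K+1})-2\rho(\rho^K-1)(-2+\rho+\rho^{K+2})+K(\rho-1)(-1+3\rho-7\rho^{K+1}+5\rho^{K+2})}{2(\rho-1)^2(\rho^{K+1}-1)^3}, & \rho\neq1,\\[1em] -\dfrac{K(K+2)}{24}, & \rho=1.\end{cases}$$
   Context: The M/M/1/K queue: a single server, Poisson arrivals at rate $\lambda$, exponential service with rate $\mu$, and at most $K$ customers in the system (arrivals finding $K$ customers are lost). $Q(t)\in\{0,\dots,K\}$ is the number in system, a birth–death chain with up-rate $\lambda$ and down-rate $\mu$; ''stationary'' means $Q(0)$ has the stationary distribution $\pi_i=\frac{1-\rho}{1-\rho^{K+1}}\rho^i$ ($\rho\ne1$), $\pi_i=\frac1{K+1}$ ($\rho=1$). $D(t)$ is the number of service completions in $[0,t]$. *)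

(* Defs.v *)
From Stdlib Require Import Reals Lra Lia Arith ClassicalEpsilon.
Open Scope R_scope.

(** Value of a real series (sum_{n>=0} u n).  Chosen by Hilbert's epsilon
    among the limits of the partial sums; all series used below converge. *)
Definition series_value (u : nat -> R) : R :=
  epsilon (inhabits 0%R) (fun l => infinite_sum u l).

Definition pi_stat (rho : R) (K i : nat) : R :=
  if (K <? i)%nat then 0 else
  if Req_EM_T rho 1 then / INR (S K)
  else (1 - rho) / (1 - rho ^ (S K)) * rho ^ i.

(** Construction of the joint process (D(t), Q(t)) by uniformisation:
    events occur at the jumps of a Poisson process of rate lam+mu; each event
    is an arrival with prob. lam/(lam+mu) (lost if Q = K) or a potential
    service with prob. mu/(lam+mu) (a departure iff Q > 0).
    [unif lam mu K n d i] = P(D = d, Q = i after n events), with Q(0) ~ pi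
    and D(0) = 0. *)
Fixpoint unif (lam mu : R) (K n : nat) : nat -> nat -> R :=
  let a := lam / (lam + mu) in
  let b := mu / (lam + mu) in
  match n with
  | O => fun d i => if (d =? 0)%nat then pi_stat (lam / mu) K i else 0
  | S n' => fun d i =>
      let p := unif lam mu K n' in
      if (K <? i)%nat then 0 else
        (if (i =? 0)%nat then 0 else a * p d (i - 1)%nat)   (* arrival  *)
      + (if (i =? K)%nat then a * p d K else 0)             (* lost arrival *)
      + (if (i =? 0)%nat then b * p d 0%nat else 0)         (* idle server *)
      + (match d with
         | O => 0
         | S d' => if (i <? K)%nat then b * p d' (S i) else 0
         end)                                               (* departure *)
  end.

Definition joint_pmf (lam mu : R) (K : nat) (t : R) (d i : nat) : R :=
  series_value (fun n =>
    exp (- ((lam + mu) * t)) * ((lam + mu) * t) ^ n / INR (fact n)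
    * unif lam mu K n d i).

Definition E_DQ (lam mu : R) (K : nat) (t : R) : R :=
  series_value (fun d =>
    sum_f_R0 (fun i => INR d * INR i * joint_pmf lam mu K t d i) K).

Definition E_D (lam mu : R) (K : nat) (t : R) : R :=
  series_value (fun d =>
    sum_f_R0 (fun i => INR d * joint_pmf lam mu K t d i) K).

Definition E_Q (lam mu : R) (K : nat) (t : R) : R :=
  sum_f_R0 (fun i => INR i * series_value (fun d => joint_pmf lam mu K t d i)) K.

Definition cov_DQ (lam mu : R) (K : nat) (t : R) : R :=
  E_DQ lam mu K t - E_D lam mu K t * E_Q lam mu K t.

Definition tends_at_infty (f : R -> R) (L : R) : Prop :=
  forall eps, eps > 0 -> exists T, forall t, T <= t -> Rabs (f t - L) < eps.

Definition cov_limit (rho : R) (K : nat) : R :=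
  let k := INR K in
  if Req_EM_T rho 1 then - (k * (k + 2)) / 24
  else rho ^ (S K) *
    ( k ^ 2 * (rho - 1) ^ 2 * (1 + 3 * rho ^ (S K))
      - 2 * rho * (rho ^ K - 1) * (-2 + rho + rho ^ (K + 2))
      + k * (rho - 1) * (-1 + 3 * rho - 7 * rho ^ (S K) + 5 * rho ^ (K + 2)) )
    / (2 * (rho - 1) ^ 2 * (rho ^ (S K) - 1) ^ 3).

(* Main.v *)
Require Import Defs.
From Stdlib Require Import Reals Lra Lia Arith ClassicalEpsilon.
Open Scope R_scope.

Lemma inf_sum_cv u l : infinite_sum u l <-> Un_cv (sum_f_R0 u) l.
Proof. unfold infinite_sum, Un_cv, Rdist, R_dist. tauto. Qed.

Lemma series_value_eq u l : infinite_sum u l -> series_value u = l.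
Proof.
  intro H. unfold series_value.
  apply (uniqueness_sum u). 2: exact H.
  apply epsilon_spec. exists l; exact H.
Qed.

Lemma cv_le u l B : Un_cv u l -> (forall n, u n <= B) -> l <= B.
Proof.
  intros Hu HB. destruct (Rle_or_lt l B) as [h|h]; auto.
  destruct (Hu (l - B)) as [N HN]; [lra|].
  specialize (HN N (le_n N)). specialize (HB N). unfold R_dist in HN.
  apply Rabs_def2 in HN. lra.
Qed.

Lemma cv_ge u l B : Un_cv u l -> (forall n, B <= u n) -> B <= l.
Proof.
  intros Hu HB. destruct (Rle_or_lt B l) as [h|h]; auto.
  destruct (Hu (B - l)) as [N HN]; [lra|].
  specialize (HN N (le_n N)). specialize (HB N). unfold R_dist in HN.
  apply Rabs_def2 in HN. lra.
Qed.

Lemma inf_sum_scal u l c : infinite_sum u l -> infinite_sum (fun n => c * u n) (c * l).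
Proof.
  rewrite !inf_sum_cv. intro H.
  apply Un_cv_ext with (fun N => c * sum_f_R0 u N).
  - intro n. rewrite scal_sum. apply sum_eq. intros; ring.
  - apply (CV_mult (fun _ => c)). intros e He. exists O. intros. unfold R_dist. 
    rewrite Rminus_diag, Rabs_R0; lra. exact H.
Qed.

Lemma inf_sum_plus u v l1 l2 : infinite_sum u l1 -> infinite_sum v l2 ->
  infinite_sum (fun n => u n + v n) (l1 + l2).
Proof.
  rewrite !inf_sum_cv. intros H1 H2.
  apply Un_cv_ext with (fun N => sum_f_R0 u N + sum_f_R0 v N).
  - intro n. rewrite sum_plus. reflexivity.
  - apply CV_plus; auto.
Qed.

Lemma inf_sum_minus u v l1 l2 : infinite_sum u l1 -> infinite_sum v l2 ->
  infinite_sum (fun n => u n - v n) (l1 - l2).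
Proof.
  intros H1 H2. 
  assert (H := inf_sum_plus _ _ _ _ H1 (inf_sum_scal _ _ (-1) H2)).
  replace (l1 - l2) with (l1 + -1 * l2) by ring.
  eapply (proj2 (inf_sum_cv _ _)). apply Un_cv_ext with (sum_f_R0 (fun n => u n + -1 * v n)).
  intro n. apply sum_eq. intros; ring. apply inf_sum_cv; auto.
Qed.

Lemma inf_sum_ext u v l : (forall n, u n = v n) -> infinite_sum u l -> infinite_sum v l.
Proof.
  rewrite !inf_sum_cv. intros He H. apply Un_cv_ext with (sum_f_R0 u); auto.
  intro n. apply sum_eq. auto.
Qed.

Lemma inf_sum_finsum (F : nat -> nat -> R) (l : nat -> R) K :
  (forall i, (i <= K)%nat -> infinite_sum (fun n => F n i) (l i)) ->
  infinite_sum (fun n => sum_f_R0 (F n) K) (sum_f_R0 l K).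
Proof.
  induction K as [|K IH]; intro H.
  - simpl. apply H. lia.
  - simpl. apply inf_sum_plus. apply IH. intros; apply H; lia. apply H; lia.
Qed.

Lemma sum_swap (a : nat -> nat -> R) N D :
  sum_f_R0 (fun n => sum_f_R0 (a n) D) N = sum_f_R0 (fun d => sum_f_R0 (fun n => a n d) N) D.
Proof.
  revert D. induction N as [|N IH]; intro D.
  - simpl. reflexivity.
  - simpl. rewrite IH. rewrite <- sum_plus. reflexivity.
Qed.

Lemma sum_nonneg f N : (forall i, (i <= N)%nat -> 0 <= f i) -> 0 <= sum_f_R0 f N.
Proof.
  induction N; intro H; simpl. apply H; lia.
  assert (0 <= f (S N)) by (apply H; lia).
  assert (0 <= sum_f_R0 f N) by (apply IHN; intros; apply H; lia). lra.
Qed.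

Lemma sum_prefix_le f m m' : (forall i, 0 <= f i) -> (m <= m')%nat ->
  sum_f_R0 f m <= sum_f_R0 f m'.
Proof.
  intros Hf Hm. induction Hm. lra. simpl. specialize (Hf (S m0)). lra.
Qed.

Lemma sum_zero_tail f n D : (n <= D)%nat -> (forall d, (n < d)%nat -> f d = 0) ->
  sum_f_R0 f D = sum_f_R0 f n.
Proof.
  intros Hn Hz. induction Hn. reflexivity. simpl. rewrite IHHn, Hz. ring. lia.
Qed.

Lemma tonelli (a : nat -> nat -> R) (A : nat -> R) Sv :
  (forall n d, 0 <= a n d) -> (forall n d, (n < d)%nat -> a n d = 0) ->
  (forall d, infinite_sum (fun n => a n d) (A d)) ->
  infinite_sum (fun n => sum_f_R0 (a n) n) Sv ->
  infinite_sum A Sv.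
Proof.
  intros Hpos Hz HA HS.
  assert (HP : forall D, infinite_sum (fun n => sum_f_R0 (a n) D) (sum_f_R0 A D)).
  { intro D. apply inf_sum_finsum. intros; apply HA. }
  assert (Hle : forall n D, sum_f_R0 (a n) D <= sum_f_R0 (a n) n).
  { intros n D. destruct (le_lt_dec D n).
    - apply sum_prefix_le; auto.
    - rewrite (sum_zero_tail _ n D); [lra|lia|]. intros; apply Hz; auto. }
  assert (HSpos : forall N, sum_f_R0 (fun n => sum_f_R0 (a n) n) N <= Sv).
  { apply growing_ineq. intro n. rewrite tech5. 
    assert (0 <= sum_f_R0 (a (S n)) (S n)) by (apply sum_nonneg; auto). lra.
    apply inf_sum_cv; auto. }
  assert (Hup : forall D, sum_f_R0 A D <= Sv).
  { intro D. apply cv_le with (sum_f_R0 (fun n => sum_f_R0 (a n) D)).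
    exact (proj1 (inf_sum_cv _ _) (HP D)).
    intro N. eapply Rle_trans; [|apply (HSpos N)]. apply sum_Rle. intros; auto. }
  assert (Hlow : forall D, sum_f_R0 (fun n => sum_f_R0 (a n) n) D <= sum_f_R0 A D).
  { intro D.
    rewrite (sum_eq _ (fun n => sum_f_R0 (a n) D) D).
    2:{ intros n Hn. symmetry. apply sum_zero_tail; auto. }
    apply (growing_ineq (sum_f_R0 (fun n => sum_f_R0 (a n) D))).
    - intro n. rewrite tech5.
      assert (0 <= sum_f_R0 (a (S n)) D) by (apply sum_nonneg; auto). lra.
    - exact (proj1 (inf_sum_cv _ _) (HP D)). }
  apply inf_sum_cv. intros e He. destruct (proj1 (inf_sum_cv _ _) HS e He) as [N HN].
  exists N. intros D HD. specialize (HN D HD). specialize (Hup D). specialize (Hlow D).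
  unfold R_dist in *. apply Rabs_def2 in HN. apply Rabs_def1; lra.
Qed.

Lemma inf_sum_comp u v lv : (forall n, 0 <= u n <= v n) -> infinite_sum v lv ->
  exists l, infinite_sum u l.
Proof.
  intros H Hv. destruct (Rseries_CV_comp u v H) as [l Hl].
  exists lv. apply inf_sum_cv; auto. exists l. apply inf_sum_cv; auto.
Qed.

Definition cf1 (a : R) (K : nat) (i : nat) := if (i =? 0)%nat then 0 else a.
Definition cf2 a K (i : nat) := if (i =? K)%nat then a else 0.
Definition cf3 b (i : nat) := if (i =? 0)%nat then b else 0.
Definition cf4 b K (i : nat) := if (i <? K)%nat then b else 0.

Definition step3 (a b : R) (K : nat) (v : nat -> R) (i : nat) : R :=
  if (K <? i)%nat then 0 else
  cf1 a K i * v (i - 1)%nat + cf2 a K i * v K + cf3 b i * v 0%nat.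
Definition dep (b : R) (K : nat) (v : nat -> R) (i : nat) : R :=
  if (K <? i)%nat then 0 else cf4 b K i * v (S i).
Definition step a b K v i := step3 a b K v i + dep b K v i.

Lemma unif_S lam mu K n d i : (i <= K)%nat ->
  unif lam mu K (S n) d i =
  cf1 (lam/(lam+mu)) K i * unif lam mu K n d (i-1) + cf2 (lam/(lam+mu)) K i * unif lam mu K n d K
  + cf3 (mu/(lam+mu)) i * unif lam mu K n d 0
  + match d with O => 0 | S d' => cf4 (mu/(lam+mu)) K i * unif lam mu K n d' (S i) end.
Proof.
  intro Hi. simpl. assert (K <? i = false)%nat as -> by (apply Nat.ltb_ge; lia).
  unfold cf1, cf2, cf3, cf4.
  destruct (i =? 0)%nat, (i =? K)%nat, d, (i <? K)%nat; ring.
Qed.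

Lemma unif_supp_d lam mu K n d i : (n < d)%nat -> unif lam mu K n d i = 0.
Proof.
  revert d i. induction n as [|n IH]; intros d i Hd.
  - simpl. destruct d; [lia|]. reflexivity.
  - destruct (le_lt_dec i K) as [Hi|Hi].
    + rewrite unif_S; auto. rewrite !IH by lia. destruct d; [lia|]. rewrite IH by lia. ring.
    + simpl. assert (K <? i = true)%nat as -> by (apply Nat.ltb_lt; lia). reflexivity.
Qed.

Lemma unif_supp_i lam mu K n d i : (K < i)%nat -> unif lam mu K n d i = 0.
Proof.
  intro Hi. destruct n; simpl.
  - unfold pi_stat. assert (K <? i = true)%nat as -> by (apply Nat.ltb_lt; lia).
    destruct (d =? 0)%nat; reflexivity.
  - assert (K <? i = true)%nat as -> by (apply Nat.ltb_lt; lia). reflexivity.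
Qed.

Lemma sum_scal_l (c : R) f N : sum_f_R0 (fun i => c * f i) N = c * sum_f_R0 f N.
Proof. rewrite scal_sum. apply sum_eq. intros; ring. Qed.

Lemma sum_step lam mu K (phi : nat -> R) n i :
  sum_f_R0 (fun d => phi d * unif lam mu K (S n) d i) (S n) =
  step3 (lam/(lam+mu)) (mu/(lam+mu)) K (fun j => sum_f_R0 (fun d => phi d * unif lam mu K n d j) n) i
  + dep (mu/(lam+mu)) K (fun j => sum_f_R0 (fun d => phi (S d) * unif lam mu K n d j) n) i.
Proof.
  unfold step3, dep. destruct (K <? i)%nat eqn:E.
  - rewrite (sum_eq _ (fun _ => 0)). rewrite sum_cte. ring.
    intros d _. rewrite unif_supp_i. ring. apply Nat.ltb_lt; auto.
  - apply Nat.ltb_ge in E.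
    set (a := lam/(lam+mu)). set (b := mu/(lam+mu)).
    rewrite (sum_eq _ (fun d => (cf1 a K i * (phi d * unif lam mu K n d (i-1)) + cf2 a K i * (phi d * unif lam mu K n d K)
        + cf3 b i * (phi d * unif lam mu K n d 0)) + phi d * match d with O => 0 | S d' => cf4 b K i * unif lam mu K n d' (S i) end)).
    2:{ intros d _. rewrite unif_S; auto. fold a b. ring. }
    rewrite sum_plus. rewrite tech5. rewrite !(unif_supp_d lam mu K n (S n)) by lia.
    rewrite (decomp_sum _ (S n)) by lia. simpl pred.
    rewrite !sum_plus. 
    rewrite (sum_eq (fun i0 => phi (S i0) * _) (fun d => cf4 b K i * (phi (S d) * unif lam mu K n d (S i)))).
    2:{ intros; ring. }
    rewrite !sum_scal_l. ring.
Qed.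

Definition S0 (rho : R) (n : nat) := sum_f_R0 (fun j => rho ^ j) n.
Definition geo (rho c : R) (K i : nat) := if (K <? i)%nat then 0 else c * rho ^ i.

Lemma pi_stat_geo rho K i : pi_stat rho K i = geo rho (/ S0 rho K) K i.
Proof.
  unfold pi_stat, geo. destruct (K <? i)%nat; auto.
  destruct (Req_EM_T rho 1) as [->|Hne].
  - unfold S0. rewrite (sum_eq _ (fun _ => 1)). rewrite sum_cte, pow1, !Rmult_1_l, Rmult_1_r. reflexivity.
    intros; apply pow1.
  - unfold S0. rewrite tech3 by auto. rewrite Rinv_div. reflexivity.
Qed.

Lemma step_ext a b K v w i : (forall j, (j <= K)%nat -> v j = w j) -> step a b K v i = step a b K w i.
Proof.
  intro H. unfold step, step3, dep. destruct (K <? i)%nat eqn:E; [ring|].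
  apply Nat.ltb_ge in E. rewrite !H by lia.
  unfold cf4. destruct (i <? K)%nat eqn:E2; [|ring]. apply Nat.ltb_lt in E2. rewrite H by lia. ring.
Qed.

Lemma step_geo a b rho c K i : (1 <= K)%nat -> a = b * rho -> a + b = 1 ->
  step a b K (geo rho c K) i = geo rho c K i.
Proof.
  intros HK Ha Hab. unfold step, step3, dep. 
  destruct (K <? i)%nat eqn:E; [unfold geo; rewrite E; ring|]. apply Nat.ltb_ge in E.
  unfold cf1, cf2, cf3, cf4, geo.
  destruct i as [|j].
  - destruct K as [|k]; [lia|]. simpl. rewrite Nat.ltb_irrefl.
    subst a. transitivity (c * (b * rho + b)); [ring|]. rewrite Hab. ring.
  - change (S j =? 0)%nat with false. replace (S j - 1)%nat with j by lia.
    assert (K <? j = false)%nat as -> by (apply Nat.ltb_ge; lia).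
    assert (K <? K = false)%nat as -> by (apply Nat.ltb_ge; lia).
    assert (Hb : b * rho + b = 1) by lra. subst a.
    destruct (S j =? K)%nat eqn:E2.
    + apply Nat.eqb_eq in E2. subst K.
      assert (S j <? S j = false)%nat as -> by (apply Nat.ltb_ge; lia).
      simpl. transitivity (c * (rho * rho ^ j) * (b * rho + b)); [ring|]. rewrite Hb; ring.
    + assert (K <? S j = false)%nat as -> by (apply Nat.eqb_neq in E2; apply Nat.ltb_ge; lia).
      apply Nat.eqb_neq in E2.
      assert (S j <? K = true)%nat as -> by (apply Nat.ltb_lt; lia).
      assert (K <? S (S j) = false)%nat as -> by (apply Nat.ltb_ge; lia).
      simpl. transitivity (c * (rho * rho ^ j) * (b * rho + b)); [ring|]. rewrite Hb; ring.
Qed.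


Definition dot K (v w : nat -> R) := sum_f_R0 (fun i => v i * w i) K.
Definition mass K (v : nat -> R) := sum_f_R0 v K.
Definition nrm K (v : nat -> R) := sum_f_R0 (fun i => Rabs (v i)) K.
Definition Pcol a b K (g : nat -> R) i :=
  (if (i <? K)%nat then a * g (S i) else a * g K) + (if (i =? 0)%nat then b * g 0%nat else b * g (i-1)%nat).

Lemma sum_last_only f k x : (forall i, (i <= k)%nat -> f i = 0) -> f (S k) = x -> sum_f_R0 f (S k) = x.
Proof.
  intros H1 H2. rewrite tech5, H2, (sum_eq _ (fun _ => 0)) by auto. rewrite sum_cte. ring.
Qed.

Lemma sum_first_only f k x : (forall i, (i <= k)%nat -> f (S i) = 0) -> f 0%nat = x -> sum_f_R0 f (S k) = x.
Proof.
  intros H1 H2. rewrite decomp_sum by lia. simpl pred. rewrite H2, (sum_eq _ (fun _ => 0)) by auto.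
  rewrite sum_cte. ring.
Qed.

Lemma dot_step a b k v g :
  dot (S k) (step a b (S k) v) g = dot (S k) v (Pcol a b (S k) g).
Proof.
  unfold dot, step, step3, dep, Pcol.
  rewrite (sum_eq _ (fun i => cf1 a (S k) i * v (i-1)%nat * g i + cf2 a (S k) i * v (S k) * g i
     + cf3 b i * v 0%nat * g i + cf4 b (S k) i * v (S i) * g i)).
  2:{ intros i Hi. assert (S k <? i = false)%nat as -> by (apply Nat.ltb_ge; lia). ring. }
  rewrite (sum_eq (fun i => v i * _) (fun i => (v i * (if (i <? S k)%nat then a * g (S i) else a * g (S k)))
     + v i * (if (i =? 0)%nat then b * g 0%nat else b * g (i-1)%nat))) by (intros; ring).
  rewrite !sum_plus.
  assert (E1 : sum_f_R0 (fun i => cf1 a (S k) i * v (i - 1)%nat * g i) (S k) = sum_f_R0 (fun i => a * v i * g (S i)) k).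
  { rewrite decomp_sum by lia. simpl pred. unfold cf1 at 1. simpl. rewrite Rmult_0_l, Rmult_0_l, Rplus_0_l.
    apply sum_eq. intros. unfold cf1. simpl. rewrite Nat.sub_0_r. ring. }
  assert (E2 : sum_f_R0 (fun i => cf2 a (S k) i * v (S k) * g i) (S k) = a * v (S k) * g (S k)).
  { apply sum_last_only. intros. unfold cf2. assert (i =? S k = false)%nat as -> by (apply Nat.eqb_neq; lia). ring.
    unfold cf2. rewrite Nat.eqb_refl. ring. }
  assert (E3 : sum_f_R0 (fun i => cf3 b i * v 0%nat * g i) (S k) = b * v 0%nat * g 0%nat).
  { apply sum_first_only. intros. unfold cf3. simpl. ring. unfold cf3. simpl. ring. }
  assert (E4 : sum_f_R0 (fun i => cf4 b (S k) i * v (S i) * g i) (S k) = sum_f_R0 (fun i => b * v (S i) * g i) k).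
  { rewrite tech5. unfold cf4 at 2. rewrite Nat.ltb_irrefl. rewrite Rmult_0_l, Rmult_0_l, Rplus_0_r.
    apply sum_eq. intros. unfold cf4. assert (i <? S k = true)%nat as -> by (apply Nat.ltb_lt; lia). ring. }
  assert (E5 : sum_f_R0 (fun i => v i * (if (i <? S k)%nat then a * g (S i) else a * g (S k))) (S k)
     = sum_f_R0 (fun i => a * v i * g (S i)) k + a * v (S k) * g (S k)).
  { rewrite tech5. rewrite Nat.ltb_irrefl. f_equal. 2: ring.
    apply sum_eq. intros. assert (i <? S k = true)%nat as -> by (apply Nat.ltb_lt; lia). ring. }
  assert (E6 : sum_f_R0 (fun i => v i * (if (i =? 0)%nat then b * g 0%nat else b * g (i-1)%nat)) (S k)
     = b * v 0%nat * g 0%nat + sum_f_R0 (fun i => b * v (S i) * g i) k).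
  { rewrite decomp_sum by lia. simpl pred. simpl. f_equal. ring.
    apply sum_eq. intros. rewrite Nat.sub_0_r. ring. }
  rewrite E1, E2, E3, E4, E5, E6. ring.
Qed.

Lemma Pcol_one a b K i : a + b = 1 -> Pcol a b K (fun _ => 1) i = 1.
Proof. intro H. unfold Pcol. destruct (i <? K)%nat, (i =? 0)%nat; lra. Qed.

Lemma mass_step a b k v : a + b = 1 -> mass (S k) (step a b (S k) v) = mass (S k) v.
Proof.
  intro H. 
  transitivity (dot (S k) (step a b (S k) v) (fun _ => 1)).
  unfold mass, dot. apply sum_eq; intros; ring.
  rewrite dot_step. unfold mass, dot. apply sum_eq; intros. rewrite Pcol_one; auto. ring.
Qed.

Lemma step_lin a b K x y v w i :
  step a b K (fun j => x * v j + y * w j) i = x * step a b K v i + y * step a b K w i.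
Proof. unfold step, step3, dep. destruct (K <? i)%nat; ring. Qed.

Lemma cf_nonneg a b K i : 0 <= a -> 0 <= b ->
  0 <= cf1 a K i /\ 0 <= cf2 a K i /\ 0 <= cf3 b i /\ 0 <= cf4 b K i.
Proof. intros. unfold cf1, cf2, cf3, cf4. destruct (i =? 0)%nat, (i =? K)%nat, (i <? K)%nat; lra. Qed.

Lemma step_mono a b K v w i : 0 <= a -> 0 <= b ->
  (forall j, (j <= K)%nat -> v j <= w j) -> step a b K v i <= step a b K w i.
Proof.
  intros Ha Hb H. unfold step, step3, dep. destruct (K <? i)%nat eqn:E; [lra|].
  apply Nat.ltb_ge in E. destruct (cf_nonneg a b K i Ha Hb) as (h1 & h2 & h3 & h4).
  assert (v (i-1)%nat <= w (i-1)%nat) by (apply H; lia).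
  assert (v K <= w K) by (apply H; lia).
  assert (v 0%nat <= w 0%nat) by (apply H; lia).
  assert (cf4 b K i * v (S i) <= cf4 b K i * w (S i)).
  { unfold cf4 in *. destruct (i <? K)%nat eqn:E2. apply Rmult_le_compat_l; auto. apply H.
    apply Nat.ltb_lt in E2; lia. lra. }
  assert (cf1 a K i * v (i-1)%nat <= cf1 a K i * w (i-1)%nat) by (apply Rmult_le_compat_l; auto).
  assert (cf2 a K i * v K <= cf2 a K i * w K) by (apply Rmult_le_compat_l; auto).
  assert (cf3 b i * v 0%nat <= cf3 b i * w 0%nat) by (apply Rmult_le_compat_l; auto).
  lra.
Qed.

Lemma step_abs a b K v i : 0 <= a -> 0 <= b ->
  Rabs (step a b K v i) <= step a b K (fun j => Rabs (v j)) i.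
Proof.
  intros Ha Hb. unfold step, step3, dep. destruct (K <? i)%nat eqn:E. rewrite Rplus_0_l, Rabs_R0; lra.
  destruct (cf_nonneg a b K i Ha Hb) as (h1 & h2 & h3 & h4).
  assert (forall c x, 0 <= c -> - (c * Rabs x) <= c * x <= c * Rabs x).
  { intros c x hc. pose proof (Rle_abs x). pose proof (Rle_abs (-x)). rewrite Rabs_Ropp in *. split; nra. }
  apply Rabs_le.
  pose proof (H _ (v (i-1)%nat) h1). pose proof (H _ (v K) h2). pose proof (H _ (v 0%nat) h3).
  pose proof (H _ (v (S i)) h4). lra.
Qed.

Lemma step_nonneg a b K v i : 0 <= a -> 0 <= b -> (forall j, (j <= K)%nat -> 0 <= v j) -> 0 <= step a b K v i.
Proof.
  intros Ha Hb H. 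
  replace 0 with (step a b K (fun _ => 0) i). apply step_mono; auto.
  unfold step, step3, dep. destruct (K <? i)%nat; ring.
Qed.

Lemma nrm_step a b k v : 0 <= a -> 0 <= b -> a + b = 1 -> nrm (S k) (step a b (S k) v) <= nrm (S k) v.
Proof.
  intros Ha Hb Hab. unfold nrm.
  apply Rle_trans with (mass (S k) (step a b (S k) (fun j => Rabs (v j)))).
  apply sum_Rle. intros. apply step_abs; auto.
  rewrite mass_step; auto. unfold mass. lra.
Qed.

Definition sh K (v : nat -> R) i := if (i =? 0)%nat then v 0%nat + v 1%nat else if (i <? K)%nat then v (S i) else 0.
Definition stepn a b K n v := Nat.iter n (step a b K) v.
Definition shn K n v := Nat.iter n (sh K) v.

Lemma step_ge_sh a b K v i : (1 <= K)%nat -> 0 <= a -> 0 <= b ->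
  (forall j, (j <= K)%nat -> 0 <= v j) -> (i <= K)%nat -> b * sh K v i <= step a b K v i.
Proof.
  intros HK Ha Hb Hv Hi. unfold step, step3, dep, sh.
  assert (K <? i = false)%nat as -> by (apply Nat.ltb_ge; lia).
  unfold cf1, cf2, cf3, cf4.
  assert (0 <= v (i-1)%nat) by (apply Hv; lia). assert (0 <= v K) by (apply Hv; lia).
  destruct i as [|j].
  - rewrite (proj2 (Nat.eqb_neq 0 K)) by lia. change (0 =? 0)%nat with true.
    rewrite (proj2 (Nat.ltb_lt 0 K)) by lia. cbv iota. 
    assert (0 <= v 0%nat) by (apply Hv; lia). assert (0 <= v 1%nat) by (apply Hv; lia). nra.
  - change (S j =? 0)%nat with false. cbv iota.
    destruct (S j <? K)%nat eqn:E.
    + assert (0 <= v (S (S j))) by (apply Hv; apply Nat.ltb_lt in E; lia).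
      destruct (S j =? K)%nat; nra.
    + destruct (S j =? K)%nat; nra.
Qed.

Lemma sh_nonneg K v i : (forall j, (j <= K)%nat -> 0 <= v j) -> (1 <= K)%nat -> (i <= K)%nat -> 0 <= sh K v i.
Proof.
  intros Hv HK Hi. unfold sh. destruct (i =? 0)%nat.
  - assert (0 <= v 0%nat) by (apply Hv; lia). assert (0 <= v 1%nat) by (apply Hv; lia). lra.
  - destruct (i <? K)%nat eqn:E. apply Hv. apply Nat.ltb_lt in E; lia. lra.
Qed.

Lemma step_scal a b K c v i : step a b K (fun j => c * v j) i = c * step a b K v i.
Proof. unfold step, step3, dep. destruct (K <? i)%nat; ring. Qed.


Lemma stepn_S a b K n v i : stepn a b K (S n) v i = step a b K (stepn a b K n v) i.
Proof. reflexivity. Qed.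

Lemma stepn_nonneg a b K n v i : 0 <= a -> 0 <= b -> (forall j, (j <= K)%nat -> 0 <= v j) ->
  (i <= K)%nat -> 0 <= stepn a b K n v i.
Proof.
  intros Ha Hb Hv. revert i. induction n; intros i Hi. apply Hv; auto.
  rewrite stepn_S. apply step_nonneg; auto.
Qed.

Lemma shn_nonneg K n v i : (1 <= K)%nat -> (forall j, (j <= K)%nat -> 0 <= v j) ->
  (i <= K)%nat -> 0 <= shn K n v i.
Proof.
  intros HK Hv. revert i. induction n; intros i Hi. apply Hv; auto.
  simpl. apply sh_nonneg; auto.
Qed.

Lemma stepn_ge_shn a b K n v i : (1 <= K)%nat -> 0 <= a -> 0 <= b ->
  (forall j, (j <= K)%nat -> 0 <= v j) -> (i <= K)%nat ->
  b ^ n * shn K n v i <= stepn a b K n v i.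
Proof.
  intros HK Ha Hb Hv. revert i. induction n; intros i Hi.
  - simpl. lra.
  - rewrite stepn_S. apply Rle_trans with (step a b K (fun j => b ^ n * shn K n v j) i).
    + rewrite step_scal. change (shn K (S n) v i) with (sh K (shn K n v) i). simpl pow.
      replace (b * b ^ n * sh K (shn K n v) i) with (b ^ n * (b * sh K (shn K n v) i)) by ring.
      apply Rmult_le_compat_l. apply pow_le; auto.
      apply step_ge_sh; auto. intros; apply shn_nonneg; auto.
    + apply step_mono; auto.
Qed.

Lemma shn_val K n v : (n <= K)%nat ->
  shn K n v 0%nat = sum_f_R0 v n /\ (forall i, (1 <= i)%nat -> (i + n <= K)%nat -> shn K n v i = v (i + n)%nat).
Proof.
  induction n; intro Hn.
  - split. reflexivity. intros. simpl. rewrite Nat.add_0_r. reflexivity.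
  - destruct IHn as [H0 H1]; [lia|]. split.
    + simpl. unfold sh at 1. simpl. fold (shn K n v). rewrite H0, H1 by lia. reflexivity.
    + intros i Hi Hin. simpl. unfold sh at 1. fold (shn K n v).
      destruct i; [lia|]. change (S i =? 0)%nat with false. cbv iota.
      rewrite (proj2 (Nat.ltb_lt (S i) K)) by lia. rewrite H1 by lia. f_equal. lia.
Qed.

Lemma minor a b K v : (1 <= K)%nat -> 0 <= a -> 0 <= b -> (forall j, (j <= K)%nat -> 0 <= v j) ->
  b ^ K * mass K v <= stepn a b K K v 0%nat.
Proof.
  intros. unfold mass. destruct (shn_val K K v (le_n K)) as [Hs0 _]. rewrite <- Hs0.
  apply stepn_ge_shn; auto. lia.
Qed.

Lemma stepn_ext a b K n v w i : (forall j, (j <= K)%nat -> v j = w j) -> (i <= K)%nat ->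
  stepn a b K n v i = stepn a b K n w i.
Proof.
  intros H. revert i. induction n; intros i Hi. simpl; auto.
  rewrite !stepn_S. apply step_ext. intros; auto.
Qed.

Lemma stepn_lin a b K n x y v w i :
  stepn a b K n (fun j => x * v j + y * w j) i = x * stepn a b K n v i + y * stepn a b K n w i.
Proof.
  revert i. induction n; intros i. reflexivity.
  rewrite !stepn_S. rewrite <- step_lin. apply step_ext. intros; auto.
Qed.

Lemma mass_stepn a b k n v : a + b = 1 -> mass (S k) (stepn a b (S k) n v) = mass (S k) v.
Proof.
  intro H. induction n. reflexivity.
  rewrite <- IHn. unfold stepn. simpl Nat.iter. apply mass_step; auto.
Qed.

Lemma mass_nonneg K v : (forall j, (j <= K)%nat -> 0 <= v j) -> 0 <= mass K v.
Proof. intros. apply sum_nonneg. auto. Qed.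

Lemma doeblin a b k v : 0 <= a -> 0 <= b -> a + b = 1 -> mass (S k) v = 0 ->
  nrm (S k) (stepn a b (S k) (S k) v) <= (1 - b ^ (S k)) * nrm (S k) v.
Proof.
  intros Ha Hb Hab Hm. set (K := S k).
  set (p := fun j => Rmax (v j) 0). set (q := fun j => Rmax (- v j) 0).
  assert (Hp : forall j, 0 <= p j) by (intro; apply Rmax_r).
  assert (Hq : forall j, 0 <= q j) by (intro; apply Rmax_r).
  assert (Hv : forall j, v j = 1 * p j + (-1) * q j).
  { intro j. unfold p, q. unfold Rmax. destruct (Rle_dec (v j) 0), (Rle_dec (- v j) 0); lra. }
  assert (Ha' : forall j, Rabs (v j) = p j + q j).
  { intro j. unfold p, q. unfold Rmax. destruct (Rle_dec (v j) 0), (Rle_dec (- v j) 0);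
    unfold Rabs; destruct (Rcase_abs (v j)); lra. }
  assert (Hmpq : mass K p = mass K q).
  { unfold mass in *. assert (sum_f_R0 v K = sum_f_R0 p K + -1 * sum_f_R0 q K).
    rewrite <- sum_scal_l, <- sum_plus. apply sum_eq. intros. rewrite Hv. ring. unfold K in *. lra. }
  assert (Hn : nrm K v = mass K p + mass K q).
  { unfold nrm, mass. rewrite <- sum_plus. apply sum_eq. intros; auto. }
  set (M := mass K p).
  set (P' := stepn a b K K p). set (Q' := stepn a b K K q).
  assert (HP'0 : forall i, (i <= K)%nat -> 0 <= P' i) by (intros; apply stepn_nonneg; auto).
  assert (HQ'0 : forall i, (i <= K)%nat -> 0 <= Q' i) by (intros; apply stepn_nonneg; auto).
  assert (HPm : mass K P' = M) by (apply mass_stepn; auto).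
  assert (HQm : mass K Q' = M) by (unfold M; rewrite Hmpq; apply mass_stepn; auto).
  assert (HP0 : b ^ K * M <= P' 0%nat) by (apply minor; auto; unfold K; lia).
  assert (HQ0 : b ^ K * M <= Q' 0%nat) by (unfold M; rewrite Hmpq; apply minor; auto; unfold K; lia).
  assert (Hs : forall i, (i <= K)%nat -> stepn a b K K v i = P' i - Q' i).
  { intros i Hi. rewrite (stepn_ext a b K K v (fun j => 1 * p j + (-1) * q j)) by auto.
    rewrite stepn_lin. unfold P', Q'. ring. }
  unfold nrm. rewrite (sum_eq _ (fun i => Rabs (P' i - Q' i))) by (intros; rewrite Hs; auto).
  fold (nrm K v). rewrite Hn.
  unfold K at 1. rewrite decomp_sum by lia. simpl pred.
  assert (E1 : Rabs (P' 0%nat - Q' 0%nat) <= (P' 0%nat - b^K * M) + (Q' 0%nat - b^K*M)).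
  { apply Rabs_le. lra. }
  assert (E2 : sum_f_R0 (fun i => Rabs (P' (S i) - Q' (S i))) k <= sum_f_R0 (fun i => P' (S i) + Q' (S i)) k).
  { apply sum_Rle. intros i Hi. assert (0 <= P' (S i)) by (apply HP'0; unfold K; lia).
    assert (0 <= Q' (S i)) by (apply HQ'0; unfold K; lia). apply Rabs_le. lra. }
  assert (E3 : mass K P' + mass K Q' = P' 0%nat + Q' 0%nat + sum_f_R0 (fun i => P' (S i) + Q' (S i)) k).
  { unfold mass, K. rewrite !(decomp_sum _ (S k)) by lia. simpl pred. rewrite sum_plus. ring. }
  rewrite HPm, HQm in E3. fold M. rewrite <- Hmpq. fold M. nra.
Qed.

Lemma stepn_add a b K m n v i : stepn a b K (m + n) v i = stepn a b K m (stepn a b K n v) i.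
Proof. unfold stepn. rewrite Nat.iter_add. reflexivity. Qed.

Lemma nrm_ext K v w : (forall i, (i <= K)%nat -> v i = w i) -> nrm K v = nrm K w.
Proof. intros. unfold nrm. apply sum_eq. intros. rewrite H; auto. Qed.

Lemma mass_ext K v w : (forall i, (i <= K)%nat -> v i = w i) -> mass K v = mass K w.
Proof. intros. unfold mass. apply sum_eq. auto. Qed.

Lemma nrm_stepn_mono a b k m n v : 0 <= a -> 0 <= b -> a + b = 1 ->
  nrm (S k) (stepn a b (S k) (m + n) v) <= nrm (S k) (stepn a b (S k) n v).
Proof.
  intros Ha Hb Hab. induction m.
  - simpl. lra.
  - eapply Rle_trans; [|apply IHm]. change (S m + n)%nat with (S (m + n)).
    unfold stepn at 1. simpl Nat.iter. apply nrm_step; auto.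
Qed.

Lemma doeblin_iter a b k j v : 0 <= a -> 0 <= b -> a + b = 1 -> mass (S k) v = 0 ->
  nrm (S k) (stepn a b (S k) (j * S k) v) <= (1 - b ^ (S k)) ^ j * nrm (S k) v.
Proof.
  intros Ha Hb Hab Hm. 
  assert (Hbk : b ^ (S k) <= 1). { rewrite <- (pow1 (S k)). apply pow_incr. lra. }
  induction j.
  - simpl. lra.
  - change (S j * S k)%nat with (S k + j * S k)%nat.
    rewrite (nrm_ext _ _ (stepn a b (S k) (S k) (stepn a b (S k) (j * S k) v))) by (intros; apply stepn_add).
    eapply Rle_trans. apply doeblin; auto. rewrite mass_stepn; auto.
    replace ((1 - b ^ S k) ^ S j * nrm (S k) v) with ((1 - b ^ S k) * ((1 - b ^ S k) ^ j * nrm (S k) v)) by (simpl; ring).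
    apply Rmult_le_compat_l. lra. auto.
Qed.

Lemma stepn_small a b k v : 0 <= a -> 0 < b -> a + b = 1 -> mass (S k) v = 0 ->
  forall e, 0 < e -> exists N, forall n, (N <= n)%nat -> nrm (S k) (stepn a b (S k) n v) <= e.
Proof.
  intros Ha Hb Hab Hm e He.
  assert (Hbk : 0 < b ^ (S k) <= 1). { split. apply pow_lt; auto. rewrite <- (pow1 (S k)). apply pow_incr. lra. }
  assert (Hnv : 0 <= nrm (S k) v) by (apply sum_nonneg; intros; apply Rabs_pos).
  destruct (pow_lt_1_zero (1 - b ^ (S k))) with (e / (nrm (S k) v + 1)) as [J HJ].
  { rewrite Rabs_pos_eq; lra. }
  { apply Rdiv_lt_0_compat; lra. }
  exists (J * S k)%nat. intros n Hn.
  replace n with ((n - J * S k) + J * S k)%nat by lia.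
  eapply Rle_trans. apply nrm_stepn_mono; lra.
  eapply Rle_trans. apply doeblin_iter; auto; lra.
  specialize (HJ J (le_n J)). rewrite Rabs_pos_eq in HJ by (apply pow_le; lra).
  apply Rlt_le in HJ.
  apply Rle_trans with (e / (nrm (S k) v + 1) * nrm (S k) v).
  apply Rmult_le_compat_r; auto.
  unfold Rdiv. rewrite Rmult_assoc. rewrite <- (Rmult_1_r e) at 2. apply Rmult_le_compat_l. lra.
  apply Rmult_le_reg_l with (nrm (S k) v + 1). lra. field_simplify; lra.
Qed.

Definition EQv rho c K := sum_f_R0 (fun i => INR i * geo rho c K i) K.
Definition yv rho c K (i : nat) := INR i - EQv rho c K.
Definition Yv rho c K j := sum_f_R0 (fun l => geo rho c K l * yv rho c K l) j.
Definition Dv a rho c K j := - Yv rho c K j / (a * geo rho c K j).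
Fixpoint gv a rho c K (n : nat) : R :=
  match n with O => 0 | S n => gv a rho c K n + Dv a rho c K n end.

Lemma geo_in rho c K i : (i <= K)%nat -> geo rho c K i = c * rho ^ i.
Proof. intro. unfold geo. rewrite (proj2 (Nat.ltb_ge K i)) by lia. reflexivity. Qed.

Lemma Y_K rho c K : sum_f_R0 (geo rho c K) K = 1 -> Yv rho c K K = 0.
Proof.
  intro H. unfold Yv, yv.
  rewrite (sum_eq _ (fun l => INR l * geo rho c K l + (- EQv rho c K) * geo rho c K l)) by (intros; ring).
  rewrite sum_plus, sum_scal_l, H. unfold EQv. ring.
Qed.

Lemma poisson a b rho c k i : a = b * rho -> a + b = 1 -> 0 < a -> 0 < b -> 0 < rho -> 0 < c ->
  sum_f_R0 (geo rho c (S k)) (S k) = 1 -> (i <= S k)%nat ->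
  Pcol a b (S k) (gv a rho c (S k)) i = gv a rho c (S k) i - yv rho c (S k) i.
Proof.
  intros Ha Hab Ha0 Hb0 Hr Hc Hs Hi. set (K := S k).
  assert (Hp : forall j, (j <= K)%nat -> 0 < geo rho c K j).
  { intros. rewrite geo_in by auto. apply Rmult_lt_0_compat; auto. apply pow_lt; auto. }
  assert (Hbal : forall j, (S j <= K)%nat -> a * geo rho c K j = b * geo rho c K (S j)).
  { intros j Hj. rewrite !geo_in by lia. rewrite Ha. simpl. ring. }
  assert (HY : forall j, (j <= K)%nat -> Yv rho c K (S j) = Yv rho c K j + geo rho c K (S j) * yv rho c K (S j)).
  { intros. unfold Yv. rewrite tech5. reflexivity. }
  unfold Pcol. destruct i as [|j].
  - rewrite (proj2 (Nat.ltb_lt 0 K)) by (unfold K; lia). simpl. unfold Dv, Yv. simpl.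
    assert (0 < geo rho c K 0) by (apply Hp; lia). field. lra.
  - change (S j =? 0)%nat with false. cbv iota. rewrite Nat.sub_succ, Nat.sub_0_r.
    destruct (S j <? K)%nat eqn:E.
    + apply Nat.ltb_lt in E. simpl gv. unfold Dv.
      rewrite HY by lia.
      assert (h1 := Hp j ltac:(lia)). assert (h2 := Hp (S j) ltac:(lia)).
      assert (h3 := Hbal j ltac:(lia)).
      replace (b * (gv a rho c K j)) with (b * (gv a rho c K j + - Yv rho c K j / (a * geo rho c K j)) + b * Yv rho c K j / (a * geo rho c K j)) by (field; lra).
      replace (b * Yv rho c K j / (a * geo rho c K j)) with (Yv rho c K j / geo rho c K (S j)).
      2:{ rewrite h3. field. lra. }
      replace b with (1 - a) by lra. field. lra.
    + apply Nat.ltb_ge in E. assert (j = k) by (unfold K in *; lia). subst j.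
      assert (HYK := Y_K rho c K Hs). unfold K in HYK. rewrite HY in HYK by (unfold K; lia).
      unfold K. simpl gv. unfold Dv.
      assert (h1 := Hp k ltac:(unfold K; lia)). assert (h2 := Hp (S k) ltac:(unfold K; lia)).
      assert (h3 := Hbal k ltac:(unfold K; lia)). unfold K in h1, h2, h3, HYK.
      replace (Yv rho c (S k) k) with (- (geo rho c (S k) (S k) * yv rho c (S k) (S k))) by lra.
      rewrite h3. replace b with (1 - a) by lra. field. split; lra.
Qed.

Lemma dot_ext K v v' w w' : (forall i, (i <= K)%nat -> v i = v' i) -> (forall i, (i <= K)%nat -> w i = w' i) ->
  dot K v w = dot K v' w'.
Proof. intros. unfold dot. apply sum_eq. intros. rewrite H, H0; auto. Qed.

Lemma term_le_sum f N i : (forall j, 0 <= f j) -> (i <= N)%nat -> f i <= sum_f_R0 f N.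
Proof.
  intros Hf Hi. induction N.
  - assert (i = 0)%nat by lia. subst. simpl. lra.
  - destruct (Nat.eq_dec i (S N)). subst. rewrite tech5.
    assert (0 <= sum_f_R0 f N) by (apply sum_nonneg; auto). lra.
    rewrite tech5. specialize (Hf (S N)). assert (f i <= sum_f_R0 f N) by (apply IHN; lia). lra.
Qed.

Lemma dot_bound K v g : Rabs (dot K v g) <= nrm K v * nrm K g.
Proof.
  unfold dot. eapply Rle_trans. apply sum_f_R0_triangle.
  unfold nrm. rewrite (Rmult_comm (sum_f_R0 _ K)), scal_sum. apply sum_Rle. intros i Hi. rewrite Rabs_mult.
  apply Rmult_le_compat_l. apply Rabs_pos.
  apply (term_le_sum (fun i => Rabs (g i))). intros; apply Rabs_pos. auto.
Qed.



Lemma stepn_geo a b rho c K n i : (1 <= K)%nat -> a = b * rho -> a + b = 1 ->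
  stepn a b K n (geo rho c K) i = geo rho c K i.
Proof.
  intros. revert i. induction n; intro i. reflexivity.
  rewrite stepn_S. rewrite (step_ext _ _ _ _ (geo rho c K)). apply step_geo; auto.
  intros; auto.
Qed.

Lemma cn_conv a b rho c k (w : nat -> nat -> R) (r : nat -> R) :
  a = b * rho -> a + b = 1 -> 0 < a -> 0 < b -> 0 < rho -> 0 < c ->
  sum_f_R0 (geo rho c (S k)) (S k) = 1 ->
  (forall i, (i <= S k)%nat -> w O i = 0) ->
  (forall n i, (i <= S k)%nat -> w (S n) i = step a b (S k) (w n) i + r i) ->
  forall e, 0 < e -> exists N, forall n, (N <= n)%nat ->
    Rabs (dot (S k) (w n) (yv rho c (S k)) -
      (dot (S k) r (gv a rho c (S k)) - mass (S k) r * dot (S k) (geo rho c (S k)) (gv a rho c (S k)))) <= e.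
Proof.
  intros Ha Hab Ha0 Hb0 Hr Hc Hs Hw0 HwS e He.
  set (K := S k). set (g := gv a rho c K). set (y := yv rho c K). set (pi := geo rho c K).
  assert (HH : forall v, dot K (step a b K v) g = dot K v g - dot K v y).
  { intro v. unfold K. rewrite dot_step. unfold dot. rewrite <- minus_sum. apply sum_eq. intros.
    unfold g, y. rewrite poisson; auto. unfold K. ring. }
  assert (W1 : forall n i, (i <= K)%nat -> w (S n) i = w n i + stepn a b K n r i).
  { induction n; intros i Hi.
    - rewrite HwS by auto. rewrite (step_ext _ _ _ _ (fun _ => 0)).
      unfold step, step3, dep. rewrite Hw0 by auto. simpl. destruct (S k <? i)%nat; ring.
      intros; apply Hw0; auto.
    - rewrite (HwS (S n)) by auto. rewrite (step_ext _ _ _ _ (fun j => 1 * w n j + 1 * stepn a b K n r j)).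
      rewrite step_lin. rewrite (HwS n) by auto. rewrite stepn_S. unfold K. ring.
      intros; rewrite IHn; auto; ring. }
  assert (W2 : forall n, dot K (w n) y = dot K r g - dot K (stepn a b K n r) g).
  { induction n.
    - simpl. rewrite (dot_ext K (w 0%nat) (fun _ => 0) y y) by auto.
      unfold dot. rewrite (sum_eq _ (fun _ => 0)) by (intros; ring). rewrite sum_cte. ring.
    - rewrite (dot_ext K (w (S n)) (fun i => w n i + stepn a b K n r i) y y) by auto.
      unfold dot at 1. rewrite (sum_eq _ (fun i => w n i * y i + stepn a b K n r i * y i)) by (intros; ring).
      rewrite sum_plus. fold (dot K (w n) y). fold (dot K (stepn a b K n r) y).
      rewrite IHn. 
      assert (dot K (stepn a b K (S n) r) g = dot K (stepn a b K n r) g - dot K (stepn a b K n r) y).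
      { rewrite <- HH. apply dot_ext; intros; auto. }
      lra. }
  set (m := mass K r). set (nu := fun j => 1 * r j + (- m) * pi j).
  assert (Hmnu : mass K nu = 0).
  { unfold mass, nu. rewrite sum_plus, !sum_scal_l. unfold pi. fold K in Hs. rewrite Hs. fold (mass K r). fold m. ring. }
  assert (Hg0 : 0 <= nrm K g) by (apply sum_nonneg; intros; apply Rabs_pos).
  destruct (stepn_small a b k nu) with (e / (nrm K g + 1)) as [N HN]; try lra.
  apply Hmnu. apply Rdiv_lt_0_compat; lra.
  exists N. intros n Hn. rewrite W2.
  assert (E : dot K (stepn a b K n r) g - m * dot K pi g = dot K (stepn a b K n nu) g).
  { unfold dot. rewrite <- sum_scal_l. rewrite <- minus_sum. apply sum_eq. intros i Hi.
    unfold nu. rewrite stepn_lin. unfold pi. rewrite stepn_geo; auto. ring. unfold K; lia. }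
  replace (dot K r g - dot K (stepn a b K n r) g - (dot K r g - m * dot K pi g))
    with (- (dot K (stepn a b K n r) g - m * dot K pi g)) by ring.
  rewrite E, Rabs_Ropp. eapply Rle_trans. apply dot_bound.
  specialize (HN n Hn). fold K in HN.
  assert (0 <= nrm K g) by (apply sum_nonneg; intros; apply Rabs_pos).
  apply Rle_trans with (e / (nrm K g + 1) * nrm K g). apply Rmult_le_compat_r; auto.
  apply Rmult_le_reg_l with (nrm K g + 1). lra. field_simplify; nra.
Qed.

Definition Fv rho c K j := sum_f_R0 (geo rho c K) j.

Lemma telescope a rho c K n :
  sum_f_R0 (fun i => geo rho c K i * gv a rho c K i) n - gv a rho c K (S n) * Fv rho c K n
  = - sum_f_R0 (fun j => Dv a rho c K j * Fv rho c K j) n.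
Proof.
  induction n.
  - simpl. unfold Fv. simpl. ring.
  - rewrite !tech5. unfold Fv in *. rewrite tech5. simpl gv in *. 
    replace (- (sum_f_R0 (fun j => Dv a rho c K j * sum_f_R0 (geo rho c K) j) n +
      Dv a rho c K (S n) * (sum_f_R0 (geo rho c K) n + geo rho c K (S n))))
      with ((- sum_f_R0 (fun j => Dv a rho c K j * sum_f_R0 (geo rho c K) j) n) -
      Dv a rho c K (S n) * (sum_f_R0 (geo rho c K) n + geo rho c K (S n))) by ring.
    rewrite <- IHn. ring.
Qed.

Lemma L0_formula a b rho c k : a = b * rho -> a + b = 1 -> 0 < a -> 0 < b -> 0 < rho -> 0 < c ->
  sum_f_R0 (geo rho c (S k)) (S k) = 1 ->
  dot (S k) (dep b (S k) (geo rho c (S k))) (gv a rho c (S k))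
   - mass (S k) (dep b (S k) (geo rho c (S k))) * dot (S k) (geo rho c (S k)) (gv a rho c (S k))
  = geo rho c (S k) (S k) * sum_f_R0 (fun j => Yv rho c (S k) j * Fv rho c (S k) j / geo rho c (S k) j) k.
Proof.
  intros Ha Hab Ha0 Hb0 Hr Hc Hs. set (K := S k).
  set (pi := geo rho c K). set (g := gv a rho c K).
  assert (Hp : forall j, (j <= K)%nat -> 0 < pi j).
  { intros. unfold pi. rewrite geo_in by auto. apply Rmult_lt_0_compat; auto. apply pow_lt; auto. }
  assert (Hbal : forall j, (S j <= K)%nat -> b * pi (S j) = a * pi j).
  { intros j Hj. unfold pi. rewrite !geo_in by lia. rewrite Ha. simpl. ring. }
  assert (Hdep : forall i, (i <= k)%nat -> dep b K pi i = a * pi i).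
  { intros i Hi. unfold dep, cf4. rewrite (proj2 (Nat.ltb_ge K i)) by (unfold K; lia).
    rewrite (proj2 (Nat.ltb_lt i K)) by (unfold K; lia). apply Hbal. unfold K; lia. }
  assert (HdepK : dep b K pi K = 0).
  { unfold dep, cf4. rewrite Nat.ltb_irrefl. destruct (K <? K)%nat; ring. }
  set (s := sum_f_R0 (fun i => pi i * g i) k).
  assert (E1 : dot K (dep b K pi) g = a * s).
  { unfold dot, K. rewrite tech5. fold K. rewrite HdepK. unfold s. rewrite <- sum_scal_l.
    rewrite Rmult_0_l, Rplus_0_r. apply sum_eq. intros. rewrite Hdep by auto. ring. }
  assert (HF : Fv rho c K k = 1 - pi K).
  { unfold Fv. rewrite (tech5 _ k) in Hs. unfold pi, K in *. lra. }
  assert (E2 : mass K (dep b K pi) = a * (1 - pi K)).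
  { unfold mass, K. rewrite tech5. fold K. rewrite HdepK. rewrite <- HF. unfold Fv. rewrite <- sum_scal_l.
    rewrite Rplus_0_r. apply sum_eq. intros. rewrite Hdep by auto. unfold pi; reflexivity. }
  assert (E3 : dot K pi g = s + pi K * g K).
  { unfold dot, K. rewrite tech5. reflexivity. }
  rewrite E1, E2, E3.
  assert (T := telescope a rho c K k). fold pi g in T. fold s in T. change (S k) with K in T.
  rewrite HF in T.
  transitivity (a * pi K * (s - g K * (1 - pi K))). ring.
  rewrite T.
  replace (a * pi K * - sum_f_R0 (fun j => Dv a rho c K j * Fv rho c K j) k) with
    (pi K * ((-a) * sum_f_R0 (fun j => Dv a rho c K j * Fv rho c K j) k)) by ring.
  rewrite <- sum_scal_l. f_equal. apply sum_eq. intros j Hj. unfold Dv. fold pi.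
  assert (0 < pi j) by (apply Hp; unfold K; lia). field. lra.
Qed.

Definition S1 rho n := sum_f_R0 (fun j => INR j * rho ^ j) n.
Definition Asum rho n := sum_f_R0 (fun j => S0 rho j * S1 rho j / rho ^ j) n.
Definition Bsum rho n := sum_f_R0 (fun j => S0 rho j * S0 rho j / rho ^ j) n.

Lemma Fv_eq rho c K j : (j <= K)%nat -> Fv rho c K j = c * S0 rho j.
Proof.
  intro. unfold Fv, S0. rewrite <- sum_scal_l. apply sum_eq. intros. apply geo_in. lia.
Qed.

Lemma EQ_eq rho c K : EQv rho c K = c * S1 rho K.
Proof.
  unfold EQv, S1. rewrite <- sum_scal_l. apply sum_eq. intros. rewrite geo_in by lia. ring.
Qed.

Lemma Yv_eq rho c K j : (j <= K)%nat -> Yv rho c K j = c * (S1 rho j - EQv rho c K * S0 rho j).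
Proof.
  intro. unfold Yv, S1, S0, yv.
  rewrite (sum_eq _ (fun l => c * (INR l * rho ^ l) + (- c * EQv rho c K) * rho ^ l)).
  rewrite sum_plus, !sum_scal_l. replace (sum_f_R0 (pow rho) j) with (sum_f_R0 (fun j0 => rho ^ j0) j) by reflexivity. ring.
  intros. rewrite geo_in by lia. ring.
Qed.

Lemma L0_closed rho c k : 0 < rho -> 0 < c ->
  geo rho c (S k) (S k) * sum_f_R0 (fun j => Yv rho c (S k) j * Fv rho c (S k) j / geo rho c (S k) j) k
  = c ^ 2 * rho ^ (S k) * (Asum rho k - EQv rho c (S k) * Bsum rho k).
Proof.
  intros Hr Hc. rewrite geo_in by lia. unfold Asum, Bsum.
  rewrite <- (sum_scal_l (EQv rho c (S k))), <- minus_sum, <- !sum_scal_l.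
  apply sum_eq. intros j Hj. rewrite Yv_eq, Fv_eq, geo_in by lia.
  assert (0 < rho ^ j) by (apply pow_lt; auto). field. lra.
Qed.

Definition S1cf rho n := (rho - INR (S n) * rho ^ (S n) + INR n * rho ^ (S (S n))) / (1 - rho) ^ 2.

Lemma S1_cf rho n : rho <> 1 -> S1 rho n = S1cf rho n.
Proof.
  intro H. assert (1 - rho <> 0) by lra. unfold S1cf, S1. induction n.
  - simpl. field. auto.
  - rewrite tech5, IHn. rewrite !S_INR. simpl pow. field. auto.
Qed.

Lemma S0_cf rho n : rho <> 1 -> S0 rho n = (1 - rho ^ (S n)) / (1 - rho).
Proof. intro. unfold S0. apply tech3; auto. Qed.

Lemma B_cf rho n : rho <> 1 -> 0 < rho -> Bsum rho n =
  ((1 / rho ^ n - rho) / (1 - rho) - 2 * rho * INR (S n) + rho ^ 2 * (1 - rho ^ (S n)) / (1 - rho)) / (1 - rho) ^ 2.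
Proof.
  intros H Hr. assert (1 - rho <> 0) by lra. unfold Bsum. induction n.
  - simpl. rewrite S0_cf by auto. simpl. field; lra.
  - rewrite tech5, IHn, S0_cf by auto. rewrite !S_INR.
    assert (0 < rho ^ n) by (apply pow_lt; auto). simpl pow. field; repeat split; lra.
Qed.

Lemma A_cf rho n : rho <> 1 -> 0 < rho -> Asum rho n =
  ((rho / rho ^ n - rho ^ 2) / (1 - rho) - rho * (INR n + 1) * (INR n + 2) / 2
   + rho ^ 2 * (INR n + 1) * INR n / 2 - (INR n + 1) * rho ^ 2
   + rho * S1cf rho (S n) - rho ^ 3 * S1cf rho n) / (1 - rho) ^ 3.
Proof.
  intros H Hr. assert (1 - rho <> 0) by lra. unfold Asum. induction n.
  - simpl. rewrite S0_cf, S1_cf by auto. unfold S1cf. simpl. field; lra.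
  - rewrite tech5, IHn, S0_cf, S1_cf by auto. unfold S1cf. rewrite !S_INR.
    assert (0 < rho ^ n) by (apply pow_lt; auto). simpl pow. field; repeat split; lra.
Qed.

Lemma S0_one n : S0 1 n = INR n + 1.
Proof. unfold S0. rewrite (sum_eq _ (fun _ => 1)) by (intros; apply pow1). rewrite sum_cte, S_INR. ring. Qed.

Lemma S1_one n : S1 1 n = INR n * (INR n + 1) / 2.
Proof. unfold S1. induction n. simpl. field. rewrite tech5, IHn, pow1, S_INR. field. Qed.

Lemma B_one n : Bsum 1 n = (INR n + 1) * (INR n + 2) * (2 * INR n + 3) / 6.
Proof. unfold Bsum. induction n. simpl. rewrite S0_one. simpl. field. 
  rewrite tech5, IHn, S0_one, pow1, S_INR. field. Qed.

Lemma A_one n : Asum 1 n = ((INR n + 1)^2 * (INR n + 2)^2 / 4 - (INR n + 1) * (INR n + 2) * (2 * INR n + 3) / 6) / 2.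
Proof. unfold Asum. induction n. simpl. rewrite S0_one, S1_one. simpl. field.
  rewrite tech5, IHn, S0_one, S1_one, pow1, S_INR. field. Qed.

Lemma final_identity rho k : 0 < rho ->
  (/ S0 rho (S k)) ^ 2 * rho ^ (S k) * (Asum rho k - (/ S0 rho (S k) * S1 rho (S k)) * Bsum rho k)
  = cov_limit rho (S k).
Proof.
  intro Hr. unfold cov_limit. destruct (Req_EM_T rho 1) as [->|Hne].
  - rewrite A_one, B_one, S0_one, S1_one, pow1, !S_INR. field.
    assert (0 <= INR k) by apply pos_INR. lra.
  - rewrite A_cf, B_cf, S0_cf, !S1_cf by auto. unfold S1cf. rewrite !S_INR.
    replace (S k + 2)%nat with (S (S (S k))) by lia.
    assert (0 < rho ^ k) by (apply pow_lt; auto).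
    assert (rho ^ (S (S k)) <> 1).
    { intro Heq. destruct (Rlt_or_le rho 1) as [hl|hl].
      - assert (rho ^ k <= 1). { rewrite <- (pow1 k). apply pow_incr. lra. }
        simpl in Heq. nra.
      - assert (1 < rho) by lra. assert (1 < rho ^ (S (S k))) by (apply Rlt_pow_R1; auto; lia). lra. }
    simpl pow in *. field. repeat split; try lra.
Qed.

Definition Uv lam mu K n i := sum_f_R0 (fun d => unif lam mu K n d i) n.
Definition M1 lam mu K n i := sum_f_R0 (fun d => INR d * unif lam mu K n d i) n.

Lemma model_facts lam mu : 0 < lam -> 0 < mu ->
  lam / (lam + mu) = mu / (lam + mu) * (lam / mu) /\ lam / (lam + mu) + mu / (lam + mu) = 1 /\
  0 < lam / (lam + mu) /\ 0 < mu / (lam + mu) /\ 0 < lam / mu.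
Proof.
  intros. repeat split.
  - field. lra.
  - field. lra.
  - apply Rdiv_lt_0_compat; lra.
  - apply Rdiv_lt_0_compat; lra.
  - apply Rdiv_lt_0_compat; lra.
Qed.

Lemma S0_pos rho n : 0 < rho -> 0 < S0 rho n.
Proof.
  intro. unfold S0. induction n. simpl. lra. rewrite tech5. assert (0 < rho ^ S n) by (apply pow_lt; auto). lra.
Qed.

Lemma geo_sum rho K : 0 < rho -> sum_f_R0 (geo rho (/ S0 rho K) K) K = 1.
Proof.
  intro. rewrite (sum_eq _ (fun i => rho ^ i * / S0 rho K)).
  rewrite <- scal_sum. change (sum_f_R0 (pow rho) K) with (S0 rho K). field. apply Rgt_not_eq, S0_pos; auto.
  intros. rewrite geo_in by auto. ring.
Qed.

Lemma geo_nonneg rho c K i : 0 < rho -> 0 < c -> 0 <= geo rho c K i.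
Proof.
  intros. unfold geo. destruct (K <? i)%nat. lra. apply Rmult_le_pos. lra. apply pow_le; lra.
Qed.

Lemma geo_le1 rho K i : 0 < rho -> geo rho (/ S0 rho K) K i <= 1.
Proof.
  intro Hr. unfold geo. destruct (K <? i)%nat eqn:E. lra. apply Nat.ltb_ge in E.
  rewrite <- (geo_sum rho K Hr).
  assert (0 < / S0 rho K) by (apply Rinv_0_lt_compat, S0_pos; auto).
  rewrite <- (geo_in rho (/ S0 rho K) K i E).
  apply (term_le_sum (geo rho (/ S0 rho K) K)). intros; apply geo_nonneg; auto. auto.
Qed.

Lemma U_geo lam mu K n i : 0 < lam -> 0 < mu -> (1 <= K)%nat ->
  Uv lam mu K n i = geo (lam / mu) (/ S0 (lam / mu) K) K i.
Proof.
  intros Hl Hm HK. destruct (model_facts lam mu Hl Hm) as (Ha & Hab & _).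
  revert i. induction n; intro i.
  - unfold Uv. simpl. apply pi_stat_geo.
  - unfold Uv. rewrite (sum_eq _ (fun d => (fun _ => 1) d * unif lam mu K (S n) d i)) by (intros; ring).
    rewrite sum_step. fold (step3 (lam / (lam + mu)) (mu / (lam + mu)) K).
    transitivity (step (lam / (lam + mu)) (mu / (lam + mu)) K (Uv lam mu K n) i).
    + unfold step. f_equal. unfold step3. destruct (K <? i)%nat; auto. unfold Uv.
      rewrite !(sum_eq (fun d => 1 * _) (fun d => unif lam mu K n d _)) by (intros; ring). reflexivity.
      unfold dep, Uv. destruct (K <? i)%nat; auto.
      rewrite !(sum_eq (fun d => 1 * _) (fun d => unif lam mu K n d _)) by (intros; ring). reflexivity.
    + rewrite (step_ext _ _ _ _ (geo (lam / mu) (/ S0 (lam / mu) K) K)).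
      apply step_geo; auto. intros; apply IHn.
Qed.

Lemma M1_rec lam mu K n i : 0 < lam -> 0 < mu -> (1 <= K)%nat ->
  M1 lam mu K (S n) i = step (lam / (lam + mu)) (mu / (lam + mu)) K (M1 lam mu K n) i
    + dep (mu / (lam + mu)) K (geo (lam / mu) (/ S0 (lam / mu) K) K) i.
Proof.
  intros Hl Hm HK. unfold M1. rewrite sum_step. unfold step. rewrite Rplus_assoc. f_equal.
  unfold dep. destruct (K <? i)%nat; [ring|].
  rewrite <- Rmult_plus_distr_l. f_equal.
  rewrite <- (U_geo lam mu K n (S i)) by auto. unfold Uv. rewrite <- sum_plus. apply sum_eq.
  intros. rewrite S_INR. ring.
Qed.

Lemma M1_zero lam mu K i : M1 lam mu K 0 i = 0.
Proof. unfold M1. simpl. ring. Qed.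

Lemma unif_nonneg lam mu K n d i : 0 < lam -> 0 < mu -> 0 <= unif lam mu K n d i.
Proof.
  intros Hl Hm. destruct (model_facts lam mu Hl Hm) as (Ha & Hab & Ha0 & Hb0 & Hr).
  revert d i. induction n; intros d i.
  - simpl. destruct (d =? 0)%nat. rewrite pi_stat_geo. apply geo_nonneg; auto.
    apply Rinv_0_lt_compat, S0_pos; auto. lra.
  - destruct (le_lt_dec i K).
    + rewrite unif_S by auto. destruct (cf_nonneg (lam/(lam+mu)) (mu/(lam+mu)) K i) as (h1&h2&h3&h4); try lra.
      assert (0 <= match d with O => 0 | S d' => cf4 (mu / (lam + mu)) K i * unif lam mu K n d' (S i) end).
      { destruct d. lra. apply Rmult_le_pos; auto. }
      pose proof (Rmult_le_pos _ _ h1 (IHn d (i-1)%nat)). pose proof (Rmult_le_pos _ _ h2 (IHn d K)).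
      pose proof (Rmult_le_pos _ _ h3 (IHn d 0%nat)). lra.
    + rewrite unif_supp_i by auto. lra.
Qed.

Lemma M1_bounds lam mu K n i : 0 < lam -> 0 < mu -> (1 <= K)%nat ->
  0 <= M1 lam mu K n i <= INR n * geo (lam / mu) (/ S0 (lam / mu) K) K i.
Proof.
  intros Hl Hm HK. split.
  - apply sum_nonneg. intros. apply Rmult_le_pos. apply pos_INR. apply unif_nonneg; auto.
  - rewrite <- (U_geo lam mu K n i) by auto. unfold M1, Uv. rewrite scal_sum. apply sum_Rle. intros d Hd.
    rewrite Rmult_comm. apply Rmult_le_compat_l. apply unif_nonneg; auto. apply le_INR; auto.
Qed.

Lemma unif_le1 lam mu K n d i : 0 < lam -> 0 < mu -> (1 <= K)%nat -> unif lam mu K n d i <= 1.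
Proof.
  intros Hl Hm HK. destruct (model_facts lam mu Hl Hm) as (_ & _ & _ & _ & Hr).
  destruct (le_lt_dec d n).
  - apply Rle_trans with (Uv lam mu K n i).
    + unfold Uv. apply (term_le_sum (fun d => unif lam mu K n d i)). intros; apply unif_nonneg; auto. auto.
    + rewrite U_geo by auto. apply geo_le1; auto.
  - rewrite unif_supp_d by auto. lra.
Qed.

Definition wt (s : R) (n : nat) := exp (- s) * s ^ n / INR (fact n).

Lemma exp_series s : infinite_sum (fun i => / INR (fact i) * s ^ i) (exp s).
Proof. unfold exp. destruct (exist_exp s) as [l H]. simpl. exact H. Qed.

Lemma wt_sum s : infinite_sum (wt s) 1.
Proof.
  replace 1 with (exp (- s) * exp s).
  2:{ rewrite exp_Ropp. field. apply Rgt_not_eq, exp_pos. }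
  apply inf_sum_ext with (fun n => exp (- s) * (/ INR (fact n) * s ^ n)).
  intro. unfold wt. field. apply INR_fact_neq_0.
  apply inf_sum_scal, exp_series.
Qed.

Lemma wt_nonneg s n : 0 <= s -> 0 <= wt s n.
Proof.
  intro. unfold wt. apply Rmult_le_pos. apply Rmult_le_pos. left; apply exp_pos. apply pow_le; auto.
  left; apply Rinv_0_lt_compat, INR_fact_lt_0.
Qed.

Lemma wt_shift s M : sum_f_R0 (fun n => INR n * wt s n) (S M) = s * sum_f_R0 (wt s) M.
Proof.
  induction M.
  - simpl. unfold wt. simpl. field.
  - rewrite tech5, IHM. rewrite (tech5 (wt s)). 
    unfold wt. rewrite fact_simpl, mult_INR. simpl pow.
    assert (INR (fact M) <> 0) by apply INR_fact_neq_0.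
    assert (INR (S M) <> 0) by (apply not_0_INR; lia).
    assert (INR (S (S M)) <> 0) by (apply not_0_INR; lia).
    rewrite fact_simpl, mult_INR. simpl pow. field. auto.
Qed.

Lemma wt_n_sum s : infinite_sum (fun n => INR n * wt s n) s.
Proof.
  apply inf_sum_cv. intros e He.
  destruct (proj1 (inf_sum_cv _ _) (wt_sum s) (e / (Rabs s + 1))) as [N HN].
  { apply Rdiv_lt_0_compat. auto. pose proof (Rabs_pos s). lra. }
  exists (S N). intros m Hm. destruct m. lia. rewrite wt_shift. unfold R_dist in *.
  specialize (HN m ltac:(lia)).
  replace (s * sum_f_R0 (wt s) m - s) with (s * (sum_f_R0 (wt s) m - 1)) by ring.
  rewrite Rabs_mult. pose proof (Rabs_pos s). pose proof (Rabs_pos (sum_f_R0 (wt s) m - 1)).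
  apply Rle_lt_trans with (Rabs s * (e / (Rabs s + 1))).
  apply Rmult_le_compat_l; lra.
  apply Rlt_le_trans with ((Rabs s + 1) * (e / (Rabs s + 1))). apply Rmult_lt_compat_r.
  apply Rdiv_lt_0_compat; lra. lra. right. field. lra.
Qed.

Lemma exp_ge_pow s N : 0 <= s -> s ^ N / INR (fact N) <= exp s.
Proof.
  intro Hs. 
  apply Rle_trans with (sum_f_R0 (fun i => / INR (fact i) * s ^ i) N).
  - replace (s ^ N / INR (fact N)) with (/ INR (fact N) * s ^ N) by (unfold Rdiv; ring).
    apply (term_le_sum (fun i => / INR (fact i) * s ^ i)). 2: lia.
    intro. apply Rmult_le_pos. left; apply Rinv_0_lt_compat, INR_fact_lt_0. apply pow_le; auto.
  - apply growing_ineq. intro n. rewrite tech5. 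
    assert (0 <= / INR (fact (S n)) * s ^ S n). apply Rmult_le_pos. left; apply Rinv_0_lt_compat, INR_fact_lt_0. apply pow_le; auto.
    lra. apply inf_sum_cv, exp_series.
Qed.

Lemma wt_small s n N : 1 <= s -> (n <= N)%nat -> wt s n <= INR (fact (S N)) / s.
Proof.
  intros Hs Hn. unfold wt.
  assert (H1 := exp_ge_pow s (S N) ltac:(lra)).
  assert (Hf := INR_fact_lt_0 (S N)). assert (Hfn := INR_fact_lt_0 n).
  assert (He := exp_pos s).
  assert (Hsn : s ^ n <= s ^ N).
  { replace N with (n + (N - n))%nat by lia. rewrite pow_add. 
    assert (1 <= s ^ (N - n)) by (apply pow_R1_Rle; auto). 
    assert (0 <= s ^ n) by (apply pow_le; lra). nra. }
  assert (1 <= INR (fact n)).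
  { assert (H := lt_O_fact n). apply (le_INR 1) in H. simpl in H. auto. }
  rewrite exp_Ropp. 
  apply Rle_trans with (s ^ N / exp s).
  { assert (Hq : s ^ n / INR (fact n) <= s ^ N).
    { apply Rle_trans with (s ^ n); auto. unfold Rdiv. rewrite <- (Rmult_1_r (s ^ n)) at 2.
      apply Rmult_le_compat_l. apply pow_le; lra. rewrite <- Rinv_1. apply Rinv_le_contravar; lra. }
    replace (/ exp s * s ^ n / INR (fact n)) with ((s ^ n / INR (fact n)) * / exp s) by (field; lra).
    unfold Rdiv at 2. apply Rmult_le_compat_r; auto. left; apply Rinv_0_lt_compat; auto. }
  simpl pow in H1.
  apply (Rmult_le_reg_r (exp s * s)). nra.
  replace (s ^ N / exp s * (exp s * s)) with (s * s ^ N) by (field; lra).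
  replace (INR (fact (S N)) / s * (exp s * s)) with (INR (fact (S N)) * exp s) by (field; lra).
  apply (Rmult_le_reg_r (/ INR (fact (S N)))). apply Rinv_0_lt_compat; auto.
  replace (INR (fact (S N)) * exp s * / INR (fact (S N))) with (exp s) by (field; lra).
  exact H1.
Qed.

Lemma cv_abs_le u l B : Un_cv u l -> (forall n, Rabs (u n) <= B) -> Rabs l <= B.
Proof.
  intros Hu HB. apply Rabs_le. split.
  - apply cv_ge with u; auto. intro n. specialize (HB n). pose proof (Rle_abs (u n)); pose proof (Rle_abs (- u n)); rewrite Rabs_Ropp in *; lra. 
  - apply cv_le with u; auto. intro n. specialize (HB n). pose proof (Rle_abs (u n)); pose proof (Rle_abs (- u n)); rewrite Rabs_Ropp in *; lra.
Qed.

Lemma poisson_avg (cn : nat -> R) L :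
  (forall e, 0 < e -> exists N, forall n, (N <= n)%nat -> Rabs (cn n - L) <= e) ->
  forall e, 0 < e -> exists S1, forall s V, S1 <= s -> infinite_sum (fun n => wt s n * cn n) V ->
    Rabs (V - L) < e.
Proof.
  intros Hc e He. destruct (Hc (e / 2)) as [N HN]; [lra|].
  set (C := sum_f_R0 (fun n => Rabs (cn n - L)) N).
  assert (HC0 : 0 <= C) by (apply sum_nonneg; intros; apply Rabs_pos).
  set (B := INR (S N) * INR (fact (S N)) * C).
  assert (HB0 : 0 <= B). { unfold B. apply Rmult_le_pos; auto. apply Rmult_le_pos; apply pos_INR. }
  exists (Rmax 1 (4 * B / e + 1)). intros s V Hs HV.
  assert (Hs1 : 1 <= s) by (eapply Rle_trans; [apply Rmax_l|eauto]).
  assert (Hs2 : 4 * B / e + 1 <= s) by (eapply Rle_trans; [apply Rmax_r|eauto]).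
  assert (HBs : B / s <= e / 4).
  { apply (Rmult_le_reg_r s). lra. replace (B / s * s) with B by (field; lra).
    assert (4 * B / e <= s - 1) by lra.
    apply (Rmult_le_compat_r (e / 4)) in H; [|lra]. 
    replace (4 * B / e * (e / 4)) with B in H by (field; lra). nra. }
  set (q := fun n => if le_lt_dec n N then C else 0).
  assert (Hq : forall n, Rabs (cn n - L) <= e / 2 + q n).
  { intro n. unfold q. destruct (le_lt_dec n N).
    - assert (Rabs (cn n - L) <= C). { apply (term_le_sum (fun n => Rabs (cn n - L))). intros; apply Rabs_pos. auto. }
      lra.
    - rewrite Rplus_0_r. apply HN. lia. }
  assert (Hq0 : forall n, 0 <= q n) by (intro n; unfold q; destruct (le_lt_dec n N); lra).
  assert (HW : forall M, sum_f_R0 (wt s) M <= 1).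
  { apply growing_ineq. intro n. rewrite tech5. pose proof (wt_nonneg s (S n)). lra. 
    apply inf_sum_cv, wt_sum. }
  assert (HQN : sum_f_R0 (fun n => wt s n * q n) N <= B / s).
  { unfold B. apply Rle_trans with (sum_f_R0 (fun n => INR (fact (S N)) / s * C) N).
    apply sum_Rle. intros n Hn. unfold q. destruct (le_lt_dec n N); [|lia].
    apply Rmult_le_compat_r; auto. apply wt_small; auto.
    rewrite sum_cte. right. field. lra. }
  assert (HQ : forall M, sum_f_R0 (fun n => wt s n * q n) M <= B / s).
  { intro M. destruct (le_lt_dec M N).
    - eapply Rle_trans; [|apply HQN]. apply sum_prefix_le; auto.
      intro. apply Rmult_le_pos; auto. apply wt_nonneg; lra.
    - rewrite (sum_zero_tail _ N M). auto. lia.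
      intros d Hd; unfold q; destruct (le_lt_dec d N); [lia|ring]. }
  assert (HV' : infinite_sum (fun n => wt s n * (cn n - L)) (V - L * 1)).
  { apply inf_sum_ext with (fun n => wt s n * cn n - L * wt s n). intros; ring.
    apply inf_sum_minus; auto. apply inf_sum_scal, wt_sum. }
  rewrite Rmult_1_r in HV'.
  assert (Rabs (V - L) <= e / 2 + e / 4).
  { apply cv_abs_le with (sum_f_R0 (fun n => wt s n * (cn n - L))). apply inf_sum_cv; auto.
    intro M. eapply Rle_trans. apply sum_f_R0_triangle.
    apply Rle_trans with (sum_f_R0 (fun n => e / 2 * wt s n + wt s n * q n) M).
    - apply sum_Rle. intros n _. rewrite Rabs_mult, Rabs_pos_eq by (apply wt_nonneg; lra).
      pose proof (wt_nonneg s n ltac:(lra)). specialize (Hq n). nra.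
    - rewrite sum_plus, sum_scal_l. specialize (HW M). specialize (HQ M). nra. }
  lra.
Qed.

Lemma joint_series lam mu K t d i : 0 < lam -> 0 < mu -> (1 <= K)%nat -> 0 <= t ->
  infinite_sum (fun n => wt ((lam + mu) * t) n * unif lam mu K n d i) (joint_pmf lam mu K t d i).
Proof.
  intros Hl Hm HK Ht. assert (Hs : 0 <= (lam + mu) * t) by nra.
  destruct (inf_sum_comp (fun n => wt ((lam + mu) * t) n * unif lam mu K n d i) (wt ((lam + mu) * t)) 1)
    as [J HJ].
  - intro n. pose proof (wt_nonneg _ n Hs). pose proof (unif_nonneg lam mu K n d i Hl Hm).
    pose proof (unif_le1 lam mu K n d i Hl Hm HK). split; nra.
  - apply wt_sum.
  - unfold joint_pmf. replace (series_value _) with J. exact HJ.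
    symmetry. apply series_value_eq. exact HJ.
Qed.

Lemma EQ_value lam mu K t : 0 < lam -> 0 < mu -> (1 <= K)%nat -> 0 <= t ->
  E_Q lam mu K t = EQv (lam / mu) (/ S0 (lam / mu) K) K.
Proof.
  intros Hl Hm HK Ht. assert (Hs : 0 <= (lam + mu) * t) by nra.
  unfold E_Q, EQv. apply sum_eq. intros i Hi. f_equal.
  apply series_value_eq.
  apply tonelli with (a := fun n d => wt ((lam + mu) * t) n * unif lam mu K n d i).
  - intros. apply Rmult_le_pos. apply wt_nonneg; auto. apply unif_nonneg; auto.
  - intros. rewrite unif_supp_d; auto. ring.
  - intro d. apply joint_series; auto.
  - apply inf_sum_ext with (fun n => geo (lam / mu) (/ S0 (lam / mu) K) K i * wt ((lam + mu) * t) n).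
    + intro n. rewrite sum_scal_l. fold (Uv lam mu K n i). rewrite U_geo; auto. ring.
    + pose proof (inf_sum_scal _ _ (geo (lam / mu) (/ S0 (lam / mu) K) K i) (wt_sum ((lam + mu) * t))) as HH. rewrite Rmult_1_r in HH. exact HH.
Qed.

Lemma ED_gen lam mu K t (psi : nat -> R) Cp : 0 < lam -> 0 < mu -> (1 <= K)%nat -> 0 <= t ->
  (forall i, (i <= K)%nat -> 0 <= psi i <= Cp) ->
  exists V, infinite_sum (fun n => wt ((lam + mu) * t) n * dot K (M1 lam mu K n) psi) V /\
    infinite_sum (fun d => sum_f_R0 (fun i => INR d * psi i * joint_pmf lam mu K t d i) K) V.
Proof.
  intros Hl Hm HK Ht Hp. assert (Hs : 0 <= (lam + mu) * t) by nra.
  set (s := (lam + mu) * t).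
  assert (Hr : 0 < lam / mu) by (apply Rdiv_lt_0_compat; lra).
  destruct (inf_sum_comp (fun n => wt s n * dot K (M1 lam mu K n) psi) (fun n => Cp * (INR n * wt s n)) (Cp * s))
    as [V HV].
  - intro n. assert (0 <= wt s n) by (apply wt_nonneg; auto).
    assert (H0 : 0 <= dot K (M1 lam mu K n) psi).
    { apply sum_nonneg. intros i Hi. apply Rmult_le_pos. apply M1_bounds; auto. apply Hp; auto. }
    assert (H1 : dot K (M1 lam mu K n) psi <= Cp * INR n).
    { apply Rle_trans with (sum_f_R0 (fun i => INR n * geo (lam / mu) (/ S0 (lam / mu) K) K i * Cp) K).
      - apply sum_Rle. intros i Hi. destruct (Hp i Hi). destruct (M1_bounds lam mu K n i Hl Hm HK).
        apply Rmult_le_compat; auto. 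
      - rewrite (sum_eq _ (fun i => (Cp * INR n) * geo (lam / mu) (/ S0 (lam / mu) K) K i)) by (intros; ring). rewrite sum_scal_l, geo_sum; auto. lra. }
    split. apply Rmult_le_pos; auto. nra.
  - apply inf_sum_scal, wt_n_sum.
  - exists V. split; auto.
    apply tonelli with (a := fun n d => sum_f_R0 (fun i => INR d * psi i * (wt s n * unif lam mu K n d i)) K).
    + intros n d. apply sum_nonneg. intros i Hi. destruct (Hp i Hi).
      apply Rmult_le_pos. apply Rmult_le_pos; auto. apply pos_INR.
      apply Rmult_le_pos. apply wt_nonneg; auto. apply unif_nonneg; auto.
    + intros n d Hnd. rewrite (sum_eq _ (fun _ => 0)). rewrite sum_cte. ring.
      intros. rewrite unif_supp_d by auto. ring.
    + intro d. apply inf_sum_finsum. intros i Hi. apply inf_sum_scal. apply joint_series; auto.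
    + apply inf_sum_ext with (fun n => wt s n * dot K (M1 lam mu K n) psi); auto.
      intro n. rewrite sum_swap. unfold dot. rewrite <- sum_scal_l. apply sum_eq. intros i Hi.
      unfold M1. rewrite (sum_eq (fun d => INR d * psi i * (wt s n * unif lam mu K n d i)) (fun d => (wt s n * psi i) * (INR d * unif lam mu K n d i))) by (intros; ring). rewrite sum_scal_l. ring.
Qed.

Lemma cov_series lam mu K t : 0 < lam -> 0 < mu -> (1 <= K)%nat -> 0 <= t ->
  infinite_sum (fun n => wt ((lam + mu) * t) n * dot K (M1 lam mu K n) (yv (lam / mu) (/ S0 (lam / mu) K) K))
    (cov_DQ lam mu K t).
Proof.
  intros Hl Hm HK Ht.
  destruct (ED_gen lam mu K t (fun _ => 1) 1 Hl Hm HK Ht) as [V1 [HV1 HD1]].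
  { intros; lra. }
  destruct (ED_gen lam mu K t INR (INR K) Hl Hm HK Ht) as [V2 [HV2 HD2]].
  { intros; split. apply pos_INR. apply le_INR; auto. }
  assert (E1 : E_D lam mu K t = V1).
  { unfold E_D. apply series_value_eq. eapply inf_sum_ext; [|exact HD1].
    intro d. apply sum_eq. intros; ring. }
  assert (E2 : E_DQ lam mu K t = V2).
  { unfold E_DQ. apply series_value_eq. exact HD2. }
  unfold cov_DQ. rewrite E1, E2, EQ_value by auto.
  replace (V2 - V1 * EQv (lam / mu) (/ S0 (lam / mu) K) K) with (V2 - EQv (lam / mu) (/ S0 (lam / mu) K) K * V1) by ring.
  eapply inf_sum_ext; [|apply (inf_sum_minus _ _ _ _ HV2 (inf_sum_scal _ _ (EQv (lam / mu) (/ S0 (lam / mu) K) K) HV1))].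
  intro n. simpl. unfold dot, yv. 
  rewrite (sum_eq (fun i => M1 lam mu K n i * (INR i - _)) (fun i => M1 lam mu K n i * INR i - EQv (lam / mu) (/ S0 (lam / mu) K) K * (M1 lam mu K n i * 1))) by (intros; ring).
  rewrite minus_sum, sum_scal_l. ring.
Qed.

Theorem mainTheorem6 (lam mu : R) (K : nat) :
  0 < lam -> 0 < mu -> (1 <= K)%nat ->
  tends_at_infty (cov_DQ lam mu K) (cov_limit (lam / mu) K).
Proof.
  intros Hl Hm HK. destruct K as [|k]; [lia|].
  destruct (model_facts lam mu Hl Hm) as (Ha & Hab & Ha0 & Hb0 & Hr).
  assert (Hc : 0 < / S0 (lam / mu) (S k)) by (apply Rinv_0_lt_compat, S0_pos; auto).
  assert (Hs := geo_sum (lam / mu) (S k) Hr).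
  assert (HL := cn_conv (lam / (lam + mu)) (mu / (lam + mu)) (lam / mu) (/ S0 (lam / mu) (S k)) k
    (M1 lam mu (S k)) (dep (mu / (lam + mu)) (S k) (geo (lam / mu) (/ S0 (lam / mu) (S k)) (S k)))
    Ha Hab Ha0 Hb0 Hr Hc Hs).
  rewrite L0_formula, L0_closed, EQ_eq, final_identity in HL; auto.
  intros eps Heps.
  destruct (poisson_avg (fun n => dot (S k) (M1 lam mu (S k) n) (yv (lam / mu) (/ S0 (lam / mu) (S k)) (S k)))
    (cov_limit (lam / mu) (S k))) with eps as [S1' HS1]; auto.
  - apply HL. intros; apply M1_zero. intros; apply M1_rec; auto; lia.
  - exists (Rmax 0 (S1' / (lam + mu))). intros t Ht.
    assert (Ht0 : 0 <= t) by (eapply Rle_trans; [apply Rmax_l|eauto]).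
    assert (Ht1 : S1' / (lam + mu) <= t) by (eapply Rle_trans; [apply Rmax_r|eauto]).
    apply (HS1 ((lam + mu) * t)).
    + apply (Rmult_le_compat_l (lam + mu)) in Ht1; [|lra]. 
      replace ((lam + mu) * (S1' / (lam + mu))) with S1' in Ht1 by (field; lra). lra.
    + apply cov_series; auto; lia.
Qed.
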